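(* Let $\Bbbk$ be a field, $H$ a Hopf $\Bbbk$-algebra with bijective antipode, $A$ a left $H$-module $\Bbbk$-algebra, and $I$ an $H$-prime ideal of $A$. Then the assignment $P \mapsto \alpha_P$ is a bijection between the set $\{ P \in \operatorname{Spec} A \mid A/P \cong \Bbbk \text{ and } P\!:\!H = I\}$ and the set of embeddings (injective morphisms) $A/I \hookrightarrow H^*$ of $H$-module algebras. Here, for such $P$, $\alpha_P\colon A\to H^*$ is given by $\alpha_P(a)(h) = $ the image of $h.a$ in $A/P=\Bbbk$, and it is regarded as the induced map on $A/I$ (its kernel is $P\!:\!H=I$).
   Context: A left $H$-module algebra is a $\Bbbk$-algebra $A$ with $1$ that is a left $H$-module via $h\otimes a\mapsto h.a$ such that $h.(ab)=(h_1.a)(h_2.b)$ and $h.1=\varepsilon(h)1$; morphisms of $H$-module algebras are algebra maps that are $H$-module maps. An $H$-ideal is a two-sided ideal which is an $H$-submodule; an $H$-ideal $I$ is $H$-prime if $A/I\ne0$ and the product of any two nonzero $H$-ideals of $A/I$ is nonzero. For an ideal $P$, $P\!:\!H=\{a\in A\mid H.a\subseteq P\}$. $H^*=\operatorname{Hom}_\Bbbk(H,\Bbbk)$ is the convolution algebra (product $(fg)(h)=f(h_1)g(h_2)$, unit $\varepsilon$), made into an $H$-module algebra by the hit action $(h \rightharpoonup f)(k) = f(kh)$ for $h,k\in H$, $f \in H^*$. For $P$ with $A/P\cong\Bbbk$, $A/P$ is identified with $\Bbbk$ via the unique algebra isomorphism. *)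

(* Defs.v *)
From HB Require Import structures.
From mathcomp Require Import all_boot all_algebra.
Set Implicit Arguments. Unset Strict Implicit. Unset Printing Implicit Defensive.
Import GRing.Theory.
Local Open Scope ring_scope.

Section Defs.
Variable k : fieldType.

Definition klin (V : lmodType k) (f : V -> k) : Prop :=
  forall (c : k) (x y : V), f (c *: x + y) = c * f x + f y.

Definition bilin (V : lmodType k) (b : V -> V -> k) : Prop :=
  (forall x, klin (b x)) /\ (forall y, klin (fun x => b x y)).

Definition trilin (V : lmodType k) (t : V -> V -> V -> k) : Prop :=
  (forall x y, klin (t x y)) /\ (forall x z, klin (fun y => t x y z)) /\
  (forall y z, klin (fun x => t x y z)).

Variable H : algType k.

(* A comultiplication is encoded by choosing, for each h, a finite
   Sweedler representation  Delta h = \sum_i h1_i (x) h2_i  as a list of pairs.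
   Equalities of tensors are expressed by equality under every bilinear
   (trilinear) form with values in k, which over a field characterizes
   equality in H (x) H (resp. H (x) H (x) H). *)
Definition is_hopf (D : H -> seq (H * H)) (e : H -> k) (S : H -> H) : Prop :=
  (forall b, bilin b -> klin (fun h => \sum_(p <- D h) b p.1 p.2)) /\
  (forall t, trilin t -> forall h,
     \sum_(p <- D h) \sum_(q <- D p.1) t q.1 q.2 p.2 =
     \sum_(p <- D h) \sum_(q <- D p.2) t p.1 q.1 q.2) /\
  (forall h, \sum_(p <- D h) e p.1 *: p.2 = h) /\
  (forall h, \sum_(p <- D h) e p.2 *: p.1 = h) /\
  klin e /\ (forall x y, e (x * y) = e x * e y) /\ e 1 = 1 /\
  (forall b, bilin b -> forall x y,
     \sum_(r <- D (x * y)) b r.1 r.2 =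
     \sum_(p <- D x) \sum_(q <- D y) b (p.1 * q.1) (p.2 * q.2)) /\
  (forall b, bilin b -> \sum_(r <- D 1) b r.1 r.2 = b 1 1) /\
  (forall (c : k) x y, S (c *: x + y) = c *: S x + S y) /\
  (forall h, \sum_(p <- D h) S p.1 * p.2 = e h *: 1) /\
  (forall h, \sum_(p <- D h) p.1 * S p.2 = e h *: 1).

Definition bijective_antipode (S : H -> H) : Prop := bijective S.

Variable A : algType k.

Definition is_module_algebra (D : H -> seq (H * H)) (e : H -> k)
  (act : H -> A -> A) : Prop :=
  (forall (c : k) g h a, act (c *: g + h) a = c *: act g a + act h a) /\
  (forall (c : k) h a b, act h (c *: a + b) = c *: act h a + act h b) /\
  (forall a, act 1 a = a) /\
  (forall g h a, act (g * h) a = act g (act h a)) /\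
  (forall h a b, act h (a * b) = \sum_(p <- D h) act p.1 a * act p.2 b) /\
  (forall h, act h 1 = e h *: 1).

Definition is_ideal (I : A -> Prop) : Prop :=
  I 0 /\ (forall x y, I x -> I y -> I (x - y)) /\
  (forall a x, I x -> I (a * x) /\ I (x * a)).

Definition is_H_ideal (act : H -> A -> A) (I : A -> Prop) : Prop :=
  is_ideal I /\ (forall h x, I x -> I (act h x)).

(* I is H-prime: A/I <> 0, and the product of two nonzero H-ideals of A/I is
   nonzero.  H-ideals of A/I are the J/I with J an H-ideal containing I;
   J/I * K/I = 0 iff every product j*k lies in I. *)
Definition is_H_prime (act : H -> A -> A) (I : A -> Prop) : Prop :=
  is_H_ideal act I /\ ~ I 1 /\
  forall J K : A -> Prop, is_H_ideal act J -> is_H_ideal act K ->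
    (forall x, I x -> J x) -> (forall x, I x -> K x) ->
    (forall x y, J x -> K y -> I (x * y)) ->
    (forall x, J x -> I x) \/ (forall x, K x -> I x).

Definition is_prime_ideal (P : A -> Prop) : Prop :=
  is_ideal P /\ ~ P 1 /\
  forall J K : A -> Prop, is_ideal J -> is_ideal K ->
    (forall x y, J x -> K y -> P (x * y)) ->
    (forall x, J x -> P x) \/ (forall x, K x -> P x).

Definition is_alg_char (chi : A -> k) : Prop :=
  klin chi /\ (forall a b, chi (a * b) = chi a * chi b) /\ chi 1 = 1.

Definition colon_H (act : H -> A -> A) (P : A -> Prop) : A -> Prop :=
  fun a => forall h, P (act h a).

(* P in Spec A, A/P ~= k (with chi : A -> A/P = k the quotient map composed
   with the unique algebra isomorphism A/P ~= k, i.e. ker chi = P), and P:H = I *)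
Definition in_S (act : H -> A -> A) (I : A -> Prop) (P : A -> Prop)
  (chi : A -> k) : Prop :=
  is_prime_ideal P /\ is_alg_char chi /\ (forall a, P a <-> chi a = 0) /\
  (forall a, colon_H act P a <-> I a).

Definition alpha (act : H -> A -> A) (chi : A -> k) : A -> H -> k :=
  fun a h => chi (act h a).

(* phi : A -> H^* (H^* = k-linear maps H -> k with convolution product, unit
   e and the hit action (g -> f)(h) = f(h g)) is a morphism of H-module
   algebras whose kernel is exactly I, i.e. phi induces an (injective)
   embedding A/I -> H^* of H-module algebras. *)
Definition is_embedding (D : H -> seq (H * H)) (e : H -> k)
  (act : H -> A -> A) (I : A -> Prop) (phi : A -> H -> k) : Prop :=
  (forall a, klin (phi a)) /\
  (forall (c : k) a b h, phi (c *: a + b) h = c * phi a h + phi b h) /\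
  (forall a b h, phi (a * b) h = \sum_(p <- D h) phi a p.1 * phi b p.2) /\
  (forall h, phi 1 h = e h) /\
  (forall g a h, phi (act g a) h = phi a (h * g)) /\
  (forall a, (forall h, phi a h = 0) <-> I a).

End Defs.

(* Main.v *)
Require Import Defs.
From HB Require Import structures.
From mathcomp Require Import all_boot all_algebra.
From mathcomp Require Import ring.
From Stdlib Require Import Classical.
Set Implicit Arguments. Unset Strict Implicit.
Local Open Scope ring_scope.
Import GRing.Theory.

Section Aux.
Variable k : fieldType.
Variable V : lmodType k.

Lemma klin0 (f : V -> k) : klin f -> f 0 = 0.
Proof.
move=> hf; have := hf 1 0 0; rewrite scale1r addr0 mul1r.
by move/(congr1 (fun z => z - f 0)); rewrite addrK subrr.
Qed.

Lemma klinD (f : V -> k) : klin f -> forall x y, f (x + y) = f x + f y.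
Proof. by move=> hf x y; have := hf 1 x y; rewrite scale1r mul1r. Qed.

Lemma klinZ (f : V -> k) : klin f -> forall c x, f (c *: x) = c * f x.
Proof. by move=> hf c x; have := hf c x 0; rewrite addr0 (klin0 hf) addr0. Qed.

Lemma klin_sum (f : V -> k) (I : Type) (s : seq I) (F : I -> V) :
  klin f -> f (\sum_(i <- s) F i) = \sum_(i <- s) f (F i).
Proof.
move=> hf; elim: s => [|x s IH]; first by rewrite !big_nil klin0.
by rewrite !big_cons klinD // IH.
Qed.
End Aux.

Theorem proposition3p2 (k : fieldType) (H : algType k)
  (D : H -> seq (H * H)) (e : H -> k) (S : H -> H)
  (hH : is_hopf D e S) (hS : bijective_antipode S)
  (A : algType k) (act : H -> A -> A) (hA : is_module_algebra D e act)
  (I : A -> Prop) (hI : is_H_prime act I) :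
  (* P |-> alpha_P lands in the embeddings A/I -> H^* *)
  (forall P chi, in_S act I P chi -> is_embedding D e act I (alpha act chi)) /\
  (* injectivity *)
  (forall P Q chi psi, in_S act I P chi -> in_S act I Q psi ->
     (forall a h, alpha act chi a h = alpha act psi a h) ->
     forall a, P a <-> Q a) /\
  (* surjectivity *)
  (forall phi, is_embedding D e act I phi ->
     exists P chi, in_S act I P chi /\
       forall a h, alpha act chi a h = phi a h).
Proof.
have [Dlin [coass [cu1 [cu2 [elin [emul [e1 [Dmul [D1 [Slin [S1 S2]]]]]]]]]]] := hH.
have [actl [actr [act1 [actM [actmul act1e]]]]] := hA.
split; [|split].
- move=> P chi [hP [[chil [chim chi1]] [hPchi hcol]]].
  rewrite /is_embedding /alpha; split; [|split; [|split; [|split; [|split]]]].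
  + by move=> a c x y; rewrite actl chil.
  + by move=> c a b h; rewrite actr chil.
  + move=> a b h; rewrite actmul klin_sum //.
    by apply: eq_bigr => p _; rewrite chim.
  + by move=> h; rewrite act1e (klinZ chil) chi1 mulr1.
  + by move=> g a h; rewrite actM.
  + move=> a; rewrite -hcol /colon_H; split => Ha h; [by apply/hPchi | by apply/hPchi].
- move=> P Q chi psi [_ [_ [hP _]]] [_ [_ [hQ _]]] heq a.
  have := heq a 1; rewrite /alpha act1 => E.
  by rewrite hP hQ E.
- move=> phi [philin [phil [phim [phi1 [phiact phik]]]]].
  pose chi := fun a => phi a 1.
  have chil : klin chi by move=> c x y; rewrite /chi phil.
  have chim : forall a b, chi (a * b) = chi a * chi b.
    move=> a b; rewrite /chi phim.
    pose b' := fun x y => phi a x * phi b y.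
    have hb : bilin b'.
      split=> [x|y] c u v; rewrite /b' philin; ring.
    exact: (D1 b' hb).
  have chi1 : chi 1 = 1 by rewrite /chi phi1 e1.
  have alphaE : forall a h, alpha act chi a h = phi a h.
    by move=> a h; rewrite /alpha /chi phiact mul1r.
  exists (fun a => chi a = 0), chi; split=> //.
  split; [|split; [by split|split=> //]].
  + split; [split; [|split]|split].
    * exact: klin0.
    * move=> x y Hx Hy; rewrite -scaleN1r addrC chil Hx Hy; ring.
    * by move=> a x Hx; rewrite !chim Hx mulr0 mul0r.
    * by rewrite chi1; apply/eqP; exact: oner_neq0.
    * move=> J K _ _ hJK.
      case: (classic (forall x, J x -> chi x = 0)) => [h|h]; [by left|right].
      move=> y Ky; apply: NNPP => hy; apply: h => x Jx.
      have := hJK x y Jx Ky; rewrite chim => /eqP; rewrite mulf_eq0 => /orP[/eqP //|/eqP //].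
  + move=> a; rewrite /colon_H -phik; split=> Ha h.
    * by rewrite -alphaE; apply: Ha.
    * by have := Ha h; rewrite -alphaE.
Qed.
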